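(* Suppose every request of the input $\sigma$ is a triggering request with respect to ALG run on $\sigma$. Let $t$ be any time and let $R$ be the set of indices of requests that have arrived by time $t$ and are pending in ALG at time $t$. For $k\in R$ let $x_k$ denote the position of $e_k$ in ALG's list at time $t$. Then the positions $x_k$, $k\in R$, are pairwise distinct; writing $R=\{k_1,\dots,k_d\}$ with $1\le x_{k_1}<x_{k_2}<\dots<x_{k_d}\le n$, we have: (1) $q_{k_\ell}\le q_{k_{\ell+1}}$ for every $\ell\in[d-1]$, i.e. ALG serves $r_{k_\ell}$ no later than $r_{k_{\ell+1}}$; (2) $2x_{k_\ell}\le x_{k_{\ell+1}}$ for every $\ell\in[d-1]$; (3) $d\le\log_2 n+1$.
   Context: List Update with Time Windows. A set $\mathbb{E}$ of $n$ elements is kept in an ordered list (position $1$ is the head). An input $\sigma$ is a sequence of requests $r_1,\dots,r_m$; request $r_k$ specifies an element $e_k\in\mathbb{E}$, an arrival time $a_k$ and a deadline $q_k\ge a_k$. An algorithm may perform an access up to position $i$ at cost $i$, serving every pending request whose element currently lies in positions $1,\dots,i$, and may swap adjacent elements at cost $1$; actions are instantaneous; every request must be served within $[a_k,q_k]$. Algorithm ALG: whenever the current time equals the deadline of at least one pending request, let the triggering element be the element at the largest current position among those elements having a pending request whose deadline is the current time, and let $i$ be its position. ALG accesses the first $\min(2i-1,n)$ positions and then moves the triggering element to the front by $i-1$ adjacent swaps. At each such event the triggering request is one (arbitrarily fixed) pending request for the triggering element whose deadline is the current time. A request of $\sigma$ is a triggering request if it is the triggering request of some event of ALG on $\sigma$.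 *)

(* Defs.v *)
From HB Require Import structures.
From mathcomp Require Import all_boot all_order all_algebra.
Set Implicit Arguments. Unset Strict Implicit. Unset Printing Implicit Defensive.
Import Order.TTheory GRing.Theory Num.Theory.
Local Open Scope ring_scope.

Section ALG.
(* Times are elements of an ordered field R (e.g. the reals).
   Elements are 'I_n; requests are indexed by 'I_m:
   request k asks for element e k, arrives at a k, has deadline q k. *)
Variables (R : realFieldType) (n m : nat).
Variables (e : 'I_m -> 'I_n) (a q : 'I_m -> R).
(* initial list, head first *)
Variable L0 : seq 'I_n.

Definition pos (x : 'I_n) (L : seq 'I_n) : nat := (index x L).+1.

(* state of ALG: current list and set of already served requests *)
Definition state := (seq 'I_n * {set 'I_m})%type.

Definition pending (st : state) (tau : R) : {set 'I_m} :=
  [set k | (a k <= tau) && (k \notin st.2)].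

Definition due (st : state) (tau : R) : {set 'I_m} :=
  [set k in pending st tau | q k == tau].

Definition trig_elt (st : state) (tau : R) : option 'I_n :=
  match [pick k in due st tau] with
  | None => None
  | Some k0 => Some (e [arg max_(k > k0 in due st tau) pos (e k) st.1]%N)
  end.

Definition cands (st : state) (tau : R) : {set 'I_m} :=
  match trig_elt st tau with
  | None => set0
  | Some x => [set k in due st tau | e k == x]
  end.

Definition step (st : state) (tau : R) : state :=
  match trig_elt st tau with
  | None => st
  | Some x =>
      let i := pos x st.1 in
      (x :: rem x st.1,
       st.2 :|: [set k in pending st tau | (pos (e k) st.1 <= minn (2 * i - 1) n)%N])
  end.

(* the only times at which ALG may act: the deadlines, sorted increasingly *)
Definition deadlines : seq R :=
  sort (fun x y : R => x <= y) (undup [seq q k | k <- enum 'I_m]).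

Definition run_upto (p : pred R) : state :=
  foldl step (L0, set0) [seq tau <- deadlines | p tau].

Definition state_before (tau : R) : state := run_upto (fun s => s < tau).

(* An event of ALG happens at tau iff tau is a deadline and the candidate set
   (equivalently the set of due pending requests) is nonempty.
   A choice rule c picks the (arbitrarily fixed) triggering request of each event. *)
Definition valid_choice (c : R -> option 'I_m) : Prop :=
  forall tau, tau \in deadlines -> cands (state_before tau) tau != set0 ->
    exists2 k, c tau = Some k & k \in cands (state_before tau) tau.

Definition is_triggering (c : R -> option 'I_m) (k : 'I_m) : Prop :=
  exists tau, [/\ tau \in deadlines, cands (state_before tau) tau != set0
                & c tau = Some k].

(* state of ALG at time t: if [after] is true, after ALG's action at time t,
   otherwise just before it *)
Definition state_at (after : bool) (t : R) : state :=
  run_upto (fun s => (s < t) || (after && (s == t))).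

Definition pending_at (after : bool) (t : R) : {set 'I_m} :=
  pending (state_at after t) t.

End ALG.

(* Main.v *)
Require Import Defs.
From HB Require Import structures.
From mathcomp Require Import all_boot all_order all_algebra.
From mathcomp Require Import zify.
Import Order.TTheory GRing.Theory Num.Theory.
Local Open Scope ring_scope.

Lemma rem_cat_notin (T : eqType) (y : T) (L1 L2 : seq T) :
  y \notin L1 -> rem y (L1 ++ y :: L2) = L1 ++ L2.
Proof.
elim: L1 => [|z L1 IH] /=; first by rewrite eqxx.
rewrite inE negb_or => /andP[ne nin]; rewrite eq_sym (negbTE ne) IH //.
Qed.

Lemma index_keep (T : eqType) (L : seq T) (y z : T) :
  uniq L -> y \in L -> (index y L < index z L)%N -> index z (y :: rem y L) = (index z L).
Proof.
move=> uL yL; case: (splitPr yL) uL => L1 L2 uL.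
have yL1 : y \notin L1.
  by move: uL; rewrite cat_uniq /= => /and3P[_ /norP[h _] _].
move=> hlt.
have yz : y != z by apply/eqP=> eyz; subst; lia.
move: hlt; rewrite rem_cat_notin // !index_cat (negbTE yL1) /= eqxx addn0 (negbTE yz).
case: ifP => zL1.
  move=> h; have h2 : (index z L1 < size L1)%N by rewrite index_mem.
  lia.
rewrite index_cat zL1 /=; lia.
Qed.

Lemma pos_keep (n : nat) (L : seq 'I_n) (y z : 'I_n) :
  uniq L -> y \in L -> (pos y L < pos z L)%N -> pos z (y :: rem y L) = pos z L.
Proof. by move=> u yL h; rewrite /pos index_keep. Qed.

Lemma arith (i j n : nat) : (0 < i)%N -> (j <= n)%N ->
  ~~ (j <= minn (2*i-1) n)%N -> (2*i <= j)%N.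
Proof. rewrite leq_min negb_and => h0 h1 /orP[] h2; lia. Qed.

Lemma pos_gt0 (n : nat) (x : 'I_n) L : (0 < pos x L)%N.
Proof. by []. Qed.


Lemma filter_split (R : realFieldType) (p1 p2 : pred R) (s : seq R) :
  sorted <=%R s -> (forall x, p1 x -> p2 x) ->
  (forall x y, p1 y -> x <= y -> p1 x) ->
  filter p2 s = filter p1 s ++ filter (fun x => p2 x && ~~ p1 x) s.
Proof.
move=> + h12 hdown; elim: s => [|x s IH] //= Hs.
have Hs' : sorted <=%R s by move: Hs; case: s {IH} => //= y s /andP[].
case: (boolP (p1 x)) => p1x /=.
  by rewrite (h12 _ p1x) IH.
have allx : all (fun y => x <= y) s.
  by apply: (order_path_min le_trans).
have nall : forall y, y \in s -> ~~ p1 y.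
  move=> y ys; apply: contra p1x => p1y; apply: (hdown _ _ p1y).
  by move/allP: allx; apply.
have -> : filter p1 s = [::].
  by apply/eqP; rewrite -[_ == _]negbK -has_filter; apply/hasPn.
have -> : [seq x0 <- s | p2 x0 & ~~ p1 x0] = [seq x <- s | p2 x].
  by apply: eq_in_filter => y ys; rewrite (nall y ys) andbT.
by rewrite /= andbT.
Qed.

Section Alg.
Variables (R : realFieldType) (n m : nat) (e : 'I_m -> 'I_n) (a q : 'I_m -> R)
  (L0 : seq 'I_n).

Local Notation step := (step e a q).
Local Notation run := (run_upto e a q L0).
Local Notation dl := (deadlines q).

Definition good (st : state n m) := perm_eq st.1 (enum 'I_n).

Lemma pos_le x (L : seq 'I_n) : perm_eq L (enum 'I_n) -> (pos x L <= n)%N.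
Proof.
move=> HL; have xL : x \in L by rewrite (perm_mem HL) mem_enum.
by rewrite /pos; move: xL; rewrite -index_mem (perm_size HL) size_enum_ord.
Qed.

Lemma step_good (st : state n m) (tau : R) : good st -> good (step st tau).
Proof.
rewrite /Defs.step; case: trig_elt => [x|] //; rewrite /good /= => HL.
have xL : x \in st.1 by rewrite (perm_mem HL) mem_enum.
apply: perm_trans HL; rewrite perm_sym; exact: perm_to_rem.
Qed.

Lemma foldl_good (st : state n m) (s : seq R) : good st -> good (foldl step st s).
Proof. by elim: s st => //= tau s IH st h; apply/IH/step_good. Qed.

Lemma step_sub (st : state n m) (tau : R) : st.2 \subset (step st tau).2.
Proof. by rewrite /Defs.step; case: trig_elt => [x|] //=; apply: subsetUl. Qed.

Lemma foldl_sub (st : state n m) (s : seq R) : st.2 \subset (foldl step st s).2.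
Proof.
elim: s st => //= tau s IH st; exact: subset_trans (step_sub st tau) (IH _).
Qed.

Lemma run_good p : perm_eq L0 (enum 'I_n) -> good (run p).
Proof. by move=> h; apply: foldl_good. Qed.

Lemma dl_sorted : sorted <=%R dl.
Proof. exact: (sort_sorted le_total). Qed.

Lemma dl_uniq : uniq dl.
Proof. by rewrite /deadlines sort_uniq undup_uniq. Qed.

Lemma run_split (p1 p2 : pred R) : (forall x, p1 x -> p2 x) ->
  (forall x y, p1 y -> x <= y -> p1 x) ->
  run p2 = foldl step (run p1) [seq s <- dl | p2 s && ~~ p1 s].
Proof.
by move=> h12 hd; rewrite /run_upto (@filter_split R p1 p2 dl dl_sorted h12 hd) foldl_cat.
Qed.

Lemma run_sub (p1 p2 : pred R) : (forall x, p1 x -> p2 x) ->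
  (forall x y, p1 y -> x <= y -> p1 x) -> (run p1).2 \subset (run p2).2.
Proof. by move=> h12 hd; rewrite (@run_split p1 p2 h12 hd); apply: foldl_sub. Qed.

Lemma run_le tau : tau \in dl ->
  run (fun s => s <= tau) = step (state_before e a q L0 tau) tau.
Proof.
move=> tdl; rewrite (@run_split (fun s => s < tau)); last first.
- by move=> x y /= h1 h2; apply: le_lt_trans h2 h1.
- by move=> x /= /ltW.
have -> : [seq s <- dl | (s <= tau) && ~~ (s < tau)] = [seq s <- dl | pred1 tau s].
  by apply: eq_filter => s /=; case: (ltgtP s tau).
by rewrite filter_pred1_uniq ?dl_uniq.
Qed.

Lemma cands_prop (st : state n m) (tau : R) k : k \in cands e a q st tau ->
  [/\ trig_elt e a q st tau = Some (e k), k \in pending a st tau & q k = tau].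
Proof.
rewrite /cands; case: trig_elt => [x|]; last by rewrite inE.
by rewrite !inE => /andP[/andP[kp /eqP qk] /eqP ->].
Qed.

Lemma step_serves (st : state n m) (tau : R) x k : trig_elt e a q st tau = Some x ->
  k \in pending a st tau ->
  (pos (e k) st.1 <= minn (2 * pos x st.1 - 1) n)%N -> k \in (step st tau).2.
Proof. by rewrite /Defs.step => -> kp h /=; rewrite in_setU inE kp h orbT. Qed.

Lemma step_keep (st : state n m) (tau : R) k t0 : good st -> t0 <= tau -> a k <= t0 ->
  k \notin (step st tau).2 -> pos (e k) (step st tau).1 = pos (e k) st.1.
Proof.
move=> gs ht hk; rewrite /Defs.step; case Htr: trig_elt => [x|] //=.
rewrite in_setU inE negb_or => /andP[nk2 /nandP[]].
  by rewrite inE (le_trans hk ht) nk2.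
move=> nle; apply: pos_keep.
- by rewrite (perm_uniq gs) enum_uniq.
- by rewrite (perm_mem gs) mem_enum.
have := pos_le (e k) _ gs; have : (0 < pos x st.1)%N by [].
move: nle; rewrite leq_min negb_and => /orP[] h1 h2 h3; lia.
Qed.

Lemma foldl_keep (st : state n m) (s : seq R) k t0 : good st -> all (fun tau => t0 <= tau) s ->
  a k <= t0 -> k \notin (foldl step st s).2 ->
  pos (e k) (foldl step st s).1 = pos (e k) st.1.
Proof.
elim: s st => //= tau s IH st gs /andP[ht hs] hk nk.
rewrite IH //; last exact: step_good.
apply: (@step_keep st tau k t0 gs ht hk); apply: contra nk; apply/subsetP; exact: foldl_sub.
Qed.

Variable (c : R -> option 'I_m).
Hypothesis Hperm : perm_eq L0 (enum 'I_n).
Hypothesis Hvalid : valid_choice e a q L0 c.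
Hypothesis Htrig : forall k, is_triggering e a q L0 c k.

Lemma trig_cands k : [/\ q k \in dl,
  k \in cands e a q (state_before e a q L0 (q k)) (q k) & c (q k) = Some k].
Proof.
have [tau [tdl nz ck]] := Htrig k.
have [k' ck' kc] := Hvalid tau tdl nz.
move: ck'; rewrite ck => -[ekk]; subst k'.
have [_ _ qk] := @cands_prop _ _ _ kc.
by rewrite qk.
Qed.

Lemma q_inj : injective q.
Proof.
move=> k j qkj; have [_ _ ck] := trig_cands k; have [_ _ cj] := trig_cands j.
by move: ck; rewrite qkj cj => -[].
Qed.

Lemma served_at k : k \in (run (fun s => s <= q k)).2.
Proof.
have [qdl kc _] := trig_cands k; have [tr kp _] := @cands_prop _ _ _ kc.
rewrite run_le //; apply: (@step_serves _ _ (e k) k tr kp).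
rewrite leq_min; apply/andP; split; last exact: (pos_le (e k) _ (run_good _ Hperm)).
rewrite /pos; lia.
Qed.

Variables (after : bool) (t : R).
Definition P := fun s : R => (s < t) || (after && (s == t)).

Lemma P_down x y : P y -> x <= y -> P x.
Proof.
rewrite /P => /orP[yt|/andP[af /eqP yt]] xy.
  by rewrite (le_lt_trans xy yt).
rewrite yt in xy; move: xy; rewrite le_eqVlt => /orP[/eqP->|->].
  by rewrite eqxx af orbT.
by [].
Qed.

Lemma pend_not k : k \in pending a (run P) t -> ~~ P (q k).
Proof.
move=> kp; apply/negP => Pq.
have sub := @run_sub (fun s => s <= q k) P (fun x h => P_down x (q k) Pq h)
  (fun x y h1 h2 => le_trans h2 h1).
move: kp; rewrite inE => /andP[_ /negP]; apply.
exact: (subsetP sub _ (served_at k)).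
Qed.

Lemma pair k j : k \in pending a (run P) t -> j \in pending a (run P) t ->
  q k < q j -> (2 * pos (e k) (run P).1 <= pos (e j) (run P).1)%N.
Proof.
move=> kp jp qkj.
have nPk := pend_not k kp.
have HPs : forall s, P s -> s < q k.
  move=> s Ps; rewrite ltNge; apply/negP => le; move/negP: nPk; apply.
  exact: (P_down (q k) s Ps le).
have tq : t <= q k.
  by rewrite leNgt; apply: contra nPk => h; rewrite /P h.
have Hb : state_before e a q L0 (q k) =
    foldl step (run P) [seq s <- dl | (s < q k) && ~~ P s].
  exact: (@run_split P (fun s => s < q k) HPs P_down).
have Hall : all (fun tau => t <= tau) [seq s <- dl | (s < q k) && ~~ P s].
  apply/allP => s; rewrite mem_filter => /andP[/andP[_ nPs] _].
  by rewrite leNgt; apply: contra nPs => h; rewrite /P h.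
have gP := run_good P Hperm.
have [qkdl kc _] := trig_cands k; have [tr kpk _] := @cands_prop _ _ _ kc.
have [_ jc _] := trig_cands j; have [_ jpj _] := @cands_prop _ _ _ jc.
have akt : a k <= t by move: kp; rewrite inE => /andP[].
have ajt : a j <= t by move: jp; rewrite inE => /andP[].
have nkb : k \notin (state_before e a q L0 (q k)).2.
  by move: kpk; rewrite inE => /andP[].
have nj_le : j \notin (run (fun s => s <= q k)).2.
  have sub := @run_sub (fun s => s <= q k) (fun s => s < q j)
    (fun x h => le_lt_trans h qkj) (fun x y h1 h2 => le_trans h2 h1).
  apply/negP => h; move: jpj; rewrite inE => /andP[_ /negP]; apply.
  exact: (subsetP sub _ h).
rewrite run_le // in nj_le.
have njb : j \notin (state_before e a q L0 (q k)).2.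
  by apply: contra nj_le; apply/subsetP; exact: step_sub.
have ek : pos (e k) (state_before e a q L0 (q k)).1 = pos (e k) (run P).1.
  by rewrite Hb; apply: (@foldl_keep _ _ k t gP Hall akt); rewrite -Hb.
have ej : pos (e j) (state_before e a q L0 (q k)).1 = pos (e j) (run P).1.
  by rewrite Hb; apply: (@foldl_keep _ _ j t gP Hall ajt); rewrite -Hb.
rewrite -ek -ej.
have jpend : j \in pending a (state_before e a q L0 (q k)) (q k).
  by rewrite inE (le_trans ajt tq) njb.
apply: (@arith _ _ n); first by [].
  exact: (pos_le (e j) _ (run_good (fun s => s < q k) Hperm)).
by apply: contra nj_le; apply: (@step_serves _ _ (e k) j tr jpend).
Qed.


Lemma main_sec :
  let st := state_at e a q L0 after t in
  let Rs := pending_at e a q L0 after t in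
  let x := fun k : 'I_m => pos (e k) st.1 in
  let ks := sort (fun k j => (x k <= x j)%N) (enum Rs) in
  let d := size ks in
  let xs := [seq x k | k <- ks] in
  let qs := [seq q k | k <- ks] in
  [/\ {in Rs &, injective x},
      (forall l, (l.+1 < d)%N -> nth 0 qs l <= nth 0 qs l.+1),
      (forall l, (l.+1 < d)%N -> (2 * nth 0%N xs l <= nth 0%N xs l.+1)%N)
    & (d <= trunc_log 2 n + 1)%N].
Proof.
move=> st Rs x ks d xs qs.
have pairx : forall k j, k \in Rs -> j \in Rs -> q k < q j -> (2 * x k <= x j)%N.
  by move=> k j; apply: pair.
have x0 : forall k, (0 < x k)%N by [].
have xn : forall k, (x k <= n)%N.
  by move=> k; apply: (pos_le (e k) _ (run_good P Hperm)).
have neq : forall k j, k \in Rs -> j \in Rs -> k != j -> (x k <= x j)%N -> q k < q j.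
  move=> k j kR jR kj xkj.
  have : q k != q j by apply: contra kj => /eqP/q_inj ->.
  rewrite neq_lt => /orP[//|qjk].
  have := pairx j k jR kR qjk; have := x0 j; lia.
have srt : sorted (fun k j => (x k <= x j)%N) ks.
  by apply: sort_sorted => k j; apply: leq_total.
have uks : uniq ks by rewrite sort_uniq enum_uniq.
have memks : forall k, k \in ks -> k \in Rs by move=> k; rewrite mem_sort mem_enum.
have cons : forall k0 l, (l.+1 < d)%N ->
    q (nth k0 ks l) < q (nth k0 ks l.+1) /\
    (2 * x (nth k0 ks l) <= x (nth k0 ks l.+1))%N.
  move=> k0 l hl.
  have hl' : (l < size ks)%N by rewrite /d in hl; lia.
  have kR : nth k0 ks l \in Rs by apply/memks/mem_nth.
  have jR : nth k0 ks l.+1 \in Rs by apply/memks/mem_nth.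
  have kj : nth k0 ks l != nth k0 ks l.+1.
    by rewrite nth_uniq //; lia.
  have xkj := (sortedP k0 srt) l hl.
  have qkj := neq _ _ kR jR kj xkj.
  by split; last exact: pairx.
have getk0 : forall l, (l < d)%N -> 'I_m.
  by move=> l; rewrite /d; case: (ks) => // y _ _; exact: y.
split.
- move=> k j kR jR xe; apply/eqP; apply/negPn/negP => kj.
  have := pairx _ _ kR jR (neq _ _ kR jR kj (eq_leq xe)).
  rewrite xe; have := x0 j; lia.
- move=> l hl; have k0 := getk0 _ (ltnW hl).
  have hl' : (l.+1 < size ks)%N by [].
  rewrite /qs (nth_map k0) ?(nth_map k0) //; last by lia.
  by apply: ltW; case: (cons k0 l hl).
- move=> l hl; have k0 := getk0 _ (ltnW hl).
  have hl' : (l.+1 < size ks)%N by [].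
  rewrite /xs (nth_map k0) ?(nth_map k0) //; last by lia.
  by case: (cons k0 l hl).
case Ed: d => [//|d'].
have k0 : 'I_m by apply: (getk0 0%N); rewrite Ed.
have pw : forall l, (l < d)%N -> (2 ^ l <= x (nth k0 ks l))%N.
  elim=> [|l IH] hl; first exact: x0.
  have := IH (ltnW hl); have [_ h] := cons k0 l hl.
  rewrite expnS; lia.
have h2 : (2 ^ d' <= x (nth k0 ks d'))%N by apply: pw; rewrite Ed.
have h1 := xn (nth k0 ks d').
have := trunc_log_max (p := 2) (k := n) (j := d') (isT : (1 < 2)%N) (leq_trans h2 h1).
lia.
Qed.

End Alg.

Theorem mainTheorem6 (R : realFieldType) (n m : nat)
    (e : 'I_m -> 'I_n) (a q : 'I_m -> R) (L0 : seq 'I_n)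
    (c : R -> option 'I_m) (after : bool) (t : R) :
  (forall k, a k <= q k) ->
  perm_eq L0 (enum 'I_n) ->
  valid_choice e a q L0 c ->
  (forall k, is_triggering e a q L0 c k) ->
  let st := state_at e a q L0 after t in
  let Rs := pending_at e a q L0 after t in
  let x := fun k : 'I_m => pos (e k) st.1 in
  let ks := sort (fun k j => (x k <= x j)%N) (enum Rs) in
  let d := size ks in
  let xs := [seq x k | k <- ks] in
  let qs := [seq q k | k <- ks] in
  [/\ {in Rs &, injective x},
      (forall l, (l.+1 < d)%N -> nth 0 qs l <= nth 0 qs l.+1),
      (forall l, (l.+1 < d)%N -> (2 * nth 0%N xs l <= nth 0%N xs l.+1)%N)
    & (d <= trunc_log 2 n + 1)%N].
Proof.
move=> _ Hp Hv Ht.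
exact: (@main_sec _ _ _ _ _ _ _ _ Hp Hv Ht after t).
Qed.
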